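(* Let $k\geq 2$ be an integer and let $\gamma\geq 0$ be a real number. For finite sets $X$ and functions $f:X\to X$, write $f^k$ for the $k$-fold iterate of $f$. Then, as $n\to\infty$, \[\max_{\substack{f:X\to X\\ |X|=n}}\frac{\deg(f^k)}{\deg(f)^\gamma}\geq \frac{1+o(1)}{(k+1)^\gamma}\,n^{1-1/2^{k-1}}.\] Moreover, if $\gamma\geq 2-1/2^{k-1}$, then for every $n\geq 1$, \[\max_{\substack{f:X\to X\\ |X|=n}}\frac{\deg(f^k)}{\deg(f)^{\gamma}}\leq n^{1-1/2^{k-1}}.\]
   Context: For finite sets $X,Y$ and a function $f:X\to Y$, the degree (of noninjectivity/noninvertibility) of $f$ is $\deg(f)=\frac{1}{|X|}\sum_{x\in X}|f^{-1}(f(x))|=\frac{1}{|X|}\sum_{y\in Y}|f^{-1}(y)|^2$. The maxima range over all $n$-element sets $X$ and all functions $f:X\to X$. *)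

(* Defs.v *)
From HB Require Import structures.
From mathcomp Require Import all_boot all_order all_algebra.
From mathcomp Require Import reals exp.
Set Implicit Arguments. Unset Strict Implicit. Unset Printing Implicit Defensive.
Import Order.TTheory GRing.Theory Num.Theory.
Local Open Scope ring_scope.

Definition fdeg (R : realType) (T : finType) (f : T -> T) : R :=
  (\sum_(x : T) (#|[set y | f y == f x]|)%:R) / (#|T|)%:R.

Definition fratio (R : realType) (T : finType) (k : nat) (gamma : R)
  (f : T -> T) : R :=
  fdeg R (iter k f) / powR (fdeg R f) gamma.

Definition maxratio (R : realType) (n k : nat) (gamma : R) : R :=
  \big[Num.max/0]_(f : {ffun 'I_n -> 'I_n}) fratio k gamma (fun x => f x).

Definition expo (R : realType) (k : nat) : R := 1 - (2 ^+ k.-1)^-1.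

(* Main.v *)
Require Import Defs.
From HB Require Import structures.
From mathcomp Require Import all_boot all_order all_algebra.
From mathcomp Require Import reals exp.
From mathcomp Require Import zify ring lra.
Import Order.TTheory GRing.Theory Num.Theory.
Set Implicit Arguments. Unset Strict Implicit. Unset Printing Implicit Defensive.
Section Comb.
Local Open Scope nat_scope.
Variable T : finType.

Definition PP (g : T -> T) : nat := \sum_x #|[set y | g y == g x]|.

Lemma sum_comp (f : T -> T) (F : T -> nat) :
  \sum_x F (f x) = \sum_y #|[set x | f x == y]| * F y.
Proof.
rewrite (partition_big f xpredT) //=; apply: eq_bigr => y _.
rewrite -sum_nat_const; rewrite [RHS]big_mkcond [LHS]big_mkcond /=.
apply: eq_bigr => x _; rewrite inE; case: eqP => [->|]//.
Qed.

Lemma card_sum (P : pred T) : #|[set x | P x]| = \sum_x (P x : nat).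
Proof. by rewrite -sum1_card big_mkcond /=; apply: eq_bigr => x _; rewrite inE; case: (P x). Qed.

Lemma PP_ge (g : T -> T) : #|T| <= PP g.
Proof.
rewrite -sum1_card /PP; apply: leq_sum => x _.
by rewrite card_gt0; apply/set0Pn; exists x; rewrite inE.
Qed.

Lemma PP1 (f : T -> T) : PP f = \sum_y #|[set x | f x == y]| ^ 2.
Proof.
rewrite /PP (sum_comp f (fun y => #|[set x | f x == y]|)).
by apply: eq_bigr => y _; rewrite expnS expn1.
Qed.

Lemma fib_sq (g : T -> T) y : #|[set y' | g y' == g y]| ^ 2 <= PP g.
Proof.
rewrite expnS expn1 -sum_nat_const /PP big_mkcond /=.
apply: leq_sum => x _; case: ifP => //; rewrite inE => /eqP e.
apply: subset_leq_card; apply/subsetP => z; rewrite !inE e //.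
Qed.

Lemma PP_comp (f g : T -> T) :
  PP (fun x => g (f x)) ^ 2 <= PP f ^ 2 * PP g.
Proof.
pose b y := #|[set x | f x == y]|.
pose a y := #|[set y' | g y' == g y]|.
have E1 : PP (fun x => g (f x)) = \sum_y \sum_y' b y * b y' * (g y' == g y).
  rewrite /PP (sum_comp f (fun z => #|[set x' | g (f x') == g z]|)).
  apply: eq_bigr => y _.
  have -> : #|[set x' | g (f x') == g y]| = \sum_y' b y' * (g y' == g y).
    by rewrite (card_sum (fun x' => g (f x') == g y)) (sum_comp f (fun z => nat_of_bool (g z == g y))).
  by rewrite big_distrr /=; apply: eq_bigr => y' _; rewrite mulnA.
have E2 : PP (fun x => g (f x)) <= \sum_y b y ^ 2 * a y.
  rewrite E1 -(leq_pmul2l (isT : 0 < 2)) big_distrr /=.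
  apply: (@leq_trans (\sum_y \sum_y' (b y ^ 2 * (g y' == g y) + b y' ^ 2 * (g y' == g y)))).
    apply: leq_sum => y _; rewrite big_distrr /=; apply: leq_sum => y' _.
    case: (g y' == g y) => /=; last by rewrite !muln0.
    rewrite !muln1; move: (b y) (b y') => u v; rewrite !expnS !expn0 !muln1; have [uv|vu] := leqP u v; [rewrite -(subnKC uv); move: (v - u) => d | rewrite -(subnKC (ltnW vu)); move: (u - v) => d]; nia.
  have H1 : \sum_y \sum_y' b y ^ 2 * (g y' == g y) = \sum_y b y ^ 2 * a y.
    apply: eq_bigr => y _; rewrite -big_distrr /=; congr (_ * _).
    by rewrite /a card_sum.
  have H2 : \sum_y \sum_y' b y' ^ 2 * (g y' == g y) = \sum_y b y ^ 2 * a y.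
    rewrite exchange_big; apply: eq_bigr => y _; rewrite -big_distrr /=; congr (_ * _).
    by rewrite /a card_sum; apply: eq_bigr => y' _; rewrite eq_sym.
  by apply: eq_leq; rewrite (eq_bigr _ (fun y _ => big_split _ _ _ _ _)) big_split /= H1 H2 mul2n addnn -mul2n.
have HA : (\max_y a y) ^ 2 <= PP g.
  case: (pickP (fun _ : T => true)) => [y0 _|T0].
    by rewrite (bigop.bigmax_eq_arg y0) //; apply: fib_sq.
  by rewrite big_pred0.
have HB : \sum_y b y ^ 2 * a y <= PP f * \max_y a y.
  rewrite PP1 big_distrl /=; apply: leq_sum => y _.
  by rewrite leq_mul2l bigop.leq_bigmax orbT.
have := leq_trans E2 HB; move: (PP f) (\max_y a y) (PP g) HA => u v w Hv Hw.
rewrite -(leq_exp2r _ _ (isT : 0 < 2)) in Hw.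
apply: (leq_trans Hw); rewrite expnMn leq_mul2l Hv orbT //.
Qed.

Lemma PP_ext (f g : T -> T) : f =1 g -> PP f = PP g.
Proof.
move=> e; apply: eq_bigr => x _; by apply: eq_card => y; rewrite !inE !e.
Qed.

Lemma PP_iter (f : T -> T) k : 0 < k -> PP (iter k f) ^ (2 ^ k.-1) <= PP f ^ (2 ^ k - 1).
Proof.
elim: k => [//|k IH] _.
case: (posnP k) => [->|kpos]; first by rewrite /= expn0 expn1.
have e : PP (iter k.+1 f) = PP (fun x => iter k f (f x)).
  by apply: PP_ext => x; rewrite iterSr.
rewrite e /=; have H := PP_comp f (iter k f); have {}IH := IH kpos.
set t := 2 ^ k.-1 in IH; have t0 : 0 < t by rewrite expn_gt0.
have Ek : 2 ^ k = 2 * t by rewrite /t -expnS prednK.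
have E3 : 2 ^ k.+1 - 1 = 2 * t + (2 * t - 1).
  by rewrite expnS Ek; lia.
have E4 : 2 ^ k.+1.-1 = 2 ^ k by [].
rewrite Ek E3 expnD expnM.
apply: (@leq_trans ((PP f ^ 2 * PP (iter k f)) ^ t)).
  by rewrite leq_exp2r.
by rewrite Ek in IH; rewrite expnMn -expnM leq_mul2l IH orbT.
Qed.

End Comb.

Section Real2.
Variable R : realType.
Local Open Scope ring_scope.

Lemma fdegE (T : finType) (g : T -> T) : fdeg R g = (PP g)%:R / (#|T|)%:R.
Proof. by rewrite /fdeg /PP natr_sum. Qed.

Lemma part2_one (n k : nat) (gamma : R) (g : 'I_n -> 'I_n) :
  (2 <= k)%N -> (1 <= n)%N -> 2 - (2 ^+ k.-1)^-1 <= gamma ->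
  fratio k gamma g <= powR n%:R (expo R k).
Proof.
move=> k2 n1 hg.
set t := (2 ^ k.-1)%N.
have t0 : (0 < t)%N by rewrite expn_gt0.
have tR : (2 ^+ k.-1 : R) = t%:R by rewrite natrX.
rewrite /fratio !fdegE card_ord /expo tR in hg *.
set P1 := PP g; set Pk := PP (iter k g).
have nP1 : (n <= P1)%N by have := PP_ge g; rewrite card_ord.
have key : (Pk ^ t <= P1 ^ (2 * t - 1))%N.
  have -> : (2 * t - 1 = 2 ^ k - 1)%N by rewrite /t -expnS prednK //; lia.
  by apply: PP_iter; lia.
have n0 : (0 : R) < n%:R by rewrite ltr0n.
set D1 := P1%:R / n%:R; set Dk := Pk%:R / n%:R.
have D11 : 1 <= D1 by rewrite /D1 ler_pdivlMr // mul1r ler_nat.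
have Dk0 : 0 <= Dk by rewrite /Dk divr_ge0.
pose gk : R := 2 - (t%:R)^-1.
have {}hg : gk <= gamma by exact: hg.
have h1 : powR D1 gk <= powR D1 gamma by apply: ler_powR.
have pg0 : 0 < powR D1 gk by apply: powR_gt0; apply: lt_le_trans D11.
suff h2 : Dk <= powR n%:R (1 - (t%:R)^-1) * powR D1 gk.
  rewrite ler_pdivrMr; last by apply: lt_le_trans h1.
  apply: (le_trans h2); rewrite ler_wpM2l //; exact: powR_ge0.
rewrite -(ler_pXn2r t0) ?nnegrE //; last by rewrite mulr_ge0 // powR_ge0.
have tRpos : (t%:R : R) != 0 by rewrite pnatr_eq0 -lt0n.
have He : (1 - (t%:R)^-1) * t%:R = (t.-1)%:R :> R.
  by rewrite mulrBl mul1r mulVf // -{1}(prednK t0) -natr1 addrK.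
have Hg : gk * t%:R = (2 * t - 1)%N%:R :> R.
  rewrite /gk mulrBl mulVf // natrB ?natrM //; lia.
rewrite [X in _ <= X]exprMn -[(powR n%:R _) ^+ t]powR_mulrn ?powR_ge0 // -[(powR D1 gk) ^+ t]powR_mulrn ?powR_ge0 //.
rewrite -!powRrM He Hg !powR_mulrn ?ler0n //; last first.
  by apply: le_trans D11.
have E : (n%:R : R) ^+ t.-1 * D1 ^+ (2 * t - 1) = P1%:R ^+ (2 * t - 1) / n%:R ^+ t.
  rewrite /D1 expr_div_n; have -> : (2 * t - 1 = t.-1 + t)%N by lia.
  rewrite !exprD; field; rewrite !expf_neq0 // gt_eqF //.
rewrite E /Dk expr_div_n ler_pM2r ?invr_gt0 ?exprn_gt0 // -!natrX ler_nat //.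
Qed.
End Real2.

Section MaxR.
Variable R : realType.
Local Open Scope ring_scope.

Lemma bigmax_leB (I : finType) (F : I -> R) B :
  0 <= B -> (forall i, F i <= B) -> \big[Num.max/0]_(i : I) F i <= B.
Proof.
move=> B0 HF; elim/big_rec: _ => // i y _ Hy.
by rewrite ge_max HF Hy.
Qed.

Lemma le_bigmaxB (I : finType) (F : I -> R) i0 :
  F i0 <= \big[Num.max/0]_(i : I) F i.
Proof.
rewrite unlock /=.
have : i0 \in index_enum I by rewrite mem_index_enum.
elim: (index_enum I) => [//|a r IH] /=.
rewrite inE => /predU1P [<-|/IH H]; rewrite le_max ?lexx //.
by rewrite H orbT.
Qed.
End MaxR.

Section Constr.
Local Open Scope nat_scope.
Variables k q : nat.
Hypothesis k1 : 0 < k.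
Hypothesis q1 : 0 < q.

Definition ss j := q ^ (2 ^ (k - j)).
Definition NN j := q ^ (2 ^ k - 2 ^ (k - j)).
Fixpoint go j x := match j with
  | 0 => 1
  | j'.+1 => if (0 < j') && (NN j' <= x) then j'.+1 else go j' x end.
Definition lev x := go k x.
Definition FF x := if x < NN k then x %/ ss (lev x) else x.

Lemma ss_gt0 j : 0 < ss j.
Proof. by rewrite expn_gt0 q1. Qed.

Lemma NN_mono i j : i <= j -> NN i <= NN j.
Proof.
move=> ij; apply: leq_pexp2l => //.
have : 2 ^ (k - j) <= 2 ^ (k - i) by apply: leq_pexp2l => //; lia.
lia.
Qed.

Lemma ss_anti i j : i <= j -> ss j <= ss i.
Proof.
move=> ij; apply: leq_pexp2l => //; apply: leq_pexp2l => //; lia.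
Qed.

Lemma NN0 : NN 0 = 1.
Proof. by rewrite /NN subn0 subnn. Qed.

Lemma NN_S j : 0 < j -> j <= k -> NN j = NN j.-1 * ss j.
Proof.
move=> j0 jk; rewrite /NN /ss -expnD; congr (q ^ _).
have e : k - j.-1 = (k - j).+1 by lia.
have h : 2 ^ (k - j.-1) <= 2 ^ k by apply: leq_pexp2l => //; lia.
rewrite e expnS in h *; lia.
Qed.

Lemma NNss j : NN j * ss j = q ^ 2 ^ k.
Proof.
rewrite /NN /ss -expnD; congr (q ^ _).
have h : 2 ^ (k - j) <= 2 ^ k by apply: leq_pexp2l => //; lia.
lia.
Qed.

Lemma goP j x : 0 < j ->
  [/\ 1 <= go j x <= j, (1 < go j x -> NN (go j x).-1 <= x)
    & (go j x < j -> x < NN (go j x))].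
Proof.
elim: j => [//|j IH] _ /=.
case: ifP => [/andP [j0 hj]|hj].
  by split; [lia | by [] | lia].
case: (posnP j) => [j0|j0].
  by rewrite j0 /=; split; lia.
have [[/andP [h1 h2] h3 h4]] := IH j0.
split => //; first by rewrite h1 /=; lia.
move=> hlt; have : go j x <= j by lia.
rewrite leq_eqVlt => /orP [/eqP e|/h4 //].
by rewrite e; move: hj; rewrite j0 /= => /negbT; rewrite -ltnNge.
Qed.

Lemma levE x : x < NN k ->
  [/\ 1 <= lev x <= k, x < NN (lev x) & (1 < lev x -> NN (lev x).-1 <= x)].
Proof.
move=> xk; have [h1 h2 h3] := goP x k1; rewrite /lev; split => //.
have : go k x <= k by lia.
rewrite leq_eqVlt => /orP [/eqP ->//|/h3 //].
Qed.

Lemma lev_le x j : 1 <= j <= k -> x < NN j -> lev x <= j.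
Proof.
move=> /andP [j1 jk] xj.
have xk : x < NN k by apply: leq_trans xj (NN_mono jk).
have [/andP [l1 lk] l2 l3] := levE xk.
rewrite leqNgt; apply/negP => jl.
have := l3 (leq_ltn_trans j1 jl).
have := NN_mono (_ : j <= (lev x).-1); lia.
Qed.

Lemma FF_le x : FF x <= x.
Proof. by rewrite /FF; case: ifP => // _; apply: leq_div. Qed.

Lemma FF_lt x : x < NN k -> FF x < NN (lev x).-1.
Proof.
move=> xk; have [/andP [l1 lk] l2 l3] := levE xk.
rewrite /FF xk ltn_divLR ?ss_gt0 // -NN_S //.
Qed.

Lemma FF_ge x : x < NN k -> 1 < lev x -> NN (lev x).-2 <= FF x.
Proof.
move=> xk l1; have [/andP [_ lk] l2 l3] := levE xk.
rewrite /FF xk leq_divRL ?ss_gt0 //.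
apply: leq_trans (l3 l1).
rewrite (NN_S (j := (lev x).-1)); [|lia|lia].
rewrite leq_mul2l ss_anti ?orbT //; lia.
Qed.

Lemma FF_fib x y : x < NN k -> FF y = FF x -> y %/ ss (lev x) = x %/ ss (lev x).
Proof.
move=> xk e.
have yk : y < NN k.
  rewrite ltnNge; apply/negP => yk.
  have : FF y = y by rewrite /FF ltnNge yk.
  have := FF_le x; lia.
have [/andP [l1 lk] _ _] := levE xk.
have [/andP [l1' lk'] _ _] := levE yk.
have hx1 := FF_lt xk; have hy1 := FF_lt yk.
have el : lev y = lev x.
  case: (ltngtP (lev y) (lev x)) => // h.
    have := FF_ge xk (leq_ltn_trans l1' h).
    have := NN_mono (_ : (lev y).-1 <= (lev x).-2); lia.
  have := FF_ge yk (leq_ltn_trans l1 h).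
  have := NN_mono (_ : (lev x).-1 <= (lev y).-2); lia.
by move: e; rewrite /FF xk yk el.
Qed.

Lemma FF_fix x y : NN k <= x -> FF y = FF x -> y = x.
Proof.
move=> xk e; have fx : FF x = x by rewrite /FF ltnNge xk.
case: (ltnP y (NN k)) => yk.
  have := FF_le y; lia.
by move: e; rewrite fx /FF ltnNge yk.
Qed.

Lemma iter_FF j x : j <= k -> x < NN j -> iter j FF x = 0.
Proof.
elim: j x => [|j IH] x jk.
  by rewrite NN0; case: x.
move=> xj; rewrite iterSr; apply: IH; first lia.
have xk : x < NN k by apply: leq_trans xj (NN_mono jk).
have hl := lev_le (_ : 1 <= j.+1 <= k) xj.
apply: leq_trans (FF_lt xk) _; apply: NN_mono; lia.
Qed.

Lemma sum_lev j : 1 <= j <= k -> \sum_(0 <= x < NN j) ss (lev x) <= j * q ^ 2 ^ k.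
Proof.
elim: j => [//|j IH] /andP [j1 jk].
have levj : forall x, NN j <= x < NN j.+1 -> lev x = j.+1.
  move=> x /andP [h1 h2]; have hl := lev_le (_ : 1 <= j.+1 <= k) h2.
  have xk : x < NN k by apply: leq_trans h2 (NN_mono jk).
  have [/andP [l1 _] l2 _] := levE xk.
  case: (ltngtP (lev x) j.+1) => // h; first have := NN_mono (_ : lev x <= j); lia.
case: (posnP j) => [j0|j0].
  subst j.
  rewrite (eq_big_nat _ _ (F2 := fun=> ss 1)); last first.
    move=> x /andP [_ hx]; have xk : x < NN k by apply: leq_trans hx (NN_mono jk).
    have [/andP [l1 _] _ _] := levE xk.
    have l2 := lev_le (_ : 1 <= 1 <= k) hx.
    by have -> : lev x = 1 by lia.
  by rewrite sum_nat_const_nat subn0 NNss mul1n.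
rewrite (big_cat_nat _ (n := NN j)) //=; last by apply: NN_mono.
rewrite mulSn [X in _ <= X]addnC; apply: leq_add; first by apply: IH; lia.
rewrite (eq_big_nat _ _ (F2 := fun=> ss j.+1)); last by move=> x hx; rewrite levj.
rewrite sum_nat_const_nat -(NNss j.+1) leq_mul2r leq_subr orbT //.
Qed.

End Constr.

Section OrdLemmas.
Local Open Scope nat_scope.

Lemma card_div_le n s c : 0 < s -> #|[set y : 'I_n | y %/ s == c]| <= s.
Proof.
move=> s0; set A := [set y : 'I_n | y %/ s == c].
have inj : {in A &, injective (fun y : 'I_n => (Ordinal (ltn_pmod y s0)) : 'I_s)}.
  move=> y y'; rewrite !inE => /eqP h /eqP h' /(congr1 val) /= e.
  apply: val_inj; rewrite /= (divn_eq y s) (divn_eq y' s) h h' e //.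
rewrite -(card_in_imset inj); apply: leq_trans (max_card _) _; rewrite card_ord //.
Qed.

Lemma card_lt n a : a <= n -> #|[set y : 'I_n | y < a]| = a.
Proof.
move=> an; rewrite (card_sum (fun y : 'I_n => y < a)).
rewrite -(big_mkord xpredT (fun i => nat_of_bool (i < a))).
rewrite (big_cat_nat _ (n := a)) //=.
rewrite (eq_big_nat _ _ (F2 := fun=> 1)); last by move=> i /andP [_ ->].
rewrite [X in _ + X](eq_big_nat _ _ (F2 := fun=> 0)); last first.
  by move=> i /andP [h _]; rewrite ltnNge h.
by rewrite !sum_nat_const_nat muln0 muln1 subn0 addn0.
Qed.
End OrdLemmas.

Section ConstrI.
Local Open Scope nat_scope.
Variables k q n : nat.
Hypothesis k1 : 0 < k.
Hypothesis q1 : 0 < q.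
Hypothesis hn : q ^ 2 ^ k <= n.

Definition fI (x : 'I_n) : 'I_n := Ordinal (leq_ltn_trans (FF_le k q x) (ltn_ord x)).

Lemma NNk_le : NN k q k <= n.
Proof.
apply: leq_trans _ hn; rewrite -(NNss k1 q1 k); apply: leq_pmulr; rewrite /ss expn_gt0 q1 //.
Qed.

Lemma PP_fI : PP fI <= k * q ^ 2 ^ k + n.
Proof.
pose w x := if x < NN k q k then ss k q (lev k q x) else 1.
apply: (@leq_trans (\sum_(x : 'I_n) w x)).
  apply: leq_sum => x _; rewrite /w; case: ifP => xk.
    have H := card_div_le n (x %/ ss k q (lev k q x)) (ss_gt0 k q1 (lev k q x)); apply: leq_trans _ H.
    apply: subset_leq_card; apply/subsetP => y; rewrite !inE => /eqP /(congr1 val) /= e.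
    by rewrite (FF_fib k1 q1 xk e).
  rewrite -(cards1 x); apply: subset_leq_card; apply/subsetP => y; rewrite !inE => /eqP /(congr1 val) /= e.
  by apply/eqP/val_inj; apply: (FF_fix k1 q1) e; rewrite leqNgt xk.
rewrite -(big_mkord xpredT (fun i => w i)).
rewrite (big_cat_nat _ (n := NN k q k)) //=; last exact: NNk_le.
apply: leq_add.
  rewrite (eq_big_nat _ _ (F2 := fun x => ss k q (lev k q x))); last first.
    by move=> i /andP [_ h]; rewrite /w h.
  by apply: (sum_lev k1 q1) => //; rewrite k1 leqnn.
rewrite (eq_big_nat _ _ (F2 := fun=> 1)); last first.
  by move=> i /andP [h _]; rewrite /w ltnNge h.
by rewrite sum_nat_const_nat muln1 leq_subr.
Qed.

Lemma val_iter j x : val (iter j fI x) = iter j (FF k q) (val x).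
Proof. by elim: j => [//|j IH]; rewrite !iterS /= IH. Qed.

Lemma PP_iter_fI : NN k q k ^ 2 <= PP (iter k fI).
Proof.
set A := [set y : 'I_n | y < NN k q k].
apply: (@leq_trans (\sum_(x in A) #|A|)).
  by rewrite sum_nat_const card_lt ?NNk_le // expnS expn1.
rewrite /PP [X in _ <= X](bigID (mem A)) /=; apply: leq_trans (leq_addr _ _).
apply: leq_sum => x xA; apply: subset_leq_card; apply/subsetP => y yA.
rewrite inE; apply/eqP/val_inj; rewrite !val_iter.
move: xA yA; rewrite !inE => xA yA.
by rewrite !(iter_FF k1 q1).
Qed.
End ConstrI.

Section Final.
Local Open Scope nat_scope.

Lemma root_ex m n : 0 < m -> exists q, q ^ m <= n < q.+1 ^ m.
Proof.
move=> m0; elim: n => [|n [q /andP [h1 h2]]].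
  by exists 0; rewrite exp0n // exp1n.
case: (leqP (q.+1 ^ m) n.+1) => h.
  exists q.+1; rewrite h /=.
  have : q.+1 ^ m < q.+2 ^ m by rewrite ltn_exp2r.
  lia.
by exists q; apply/andP; split => //; lia.
Qed.

Lemma bern q J : q.+1 ^ J.+1 <= q ^ J.+1 + J.+1 * q.+1 ^ J.
Proof.
elim: J => [|J IH]; first by rewrite !expn1 expn0 muln1 addn1.
have h2 : q ^ J.+1 <= q.+1 ^ J.+1 by rewrite leq_exp2r.
rewrite (expnS q.+1 J.+1) (expnS q J.+1).
move: IH h2; rewrite (expnS q.+1 J).
move: (q ^ J.+1) (q.+1 ^ J) => A B; nia.
Qed.

Lemma exp_mono a b e : a <= b -> a ^ e <= b ^ e.
Proof. by case: e => [//|e] h; rewrite leq_exp2r. Qed.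
End Final.

Section FinalR.
Variable R : realType.
Local Open Scope ring_scope.

Lemma fratio_ext (T : finType) k (gamma : R) (g g' : T -> T) :
  g =1 g' -> fratio k gamma g = fratio k gamma g'.
Proof.
move=> e; rewrite /fratio !fdegE (PP_ext e).
by rewrite (PP_ext (eq_iter e k)).
Qed.

Lemma bernR (q J : nat) (eps : R) : 0 <= eps -> (J.+1)%:R <= eps * (q.+1)%:R ->
  (1 - eps) * ((q.+1 ^ J.+1)%N)%:R <= ((q ^ J.+1)%N)%:R.
Proof.
move=> e0 hJ; have := bern q J; rewrite -(ler_nat R) natrD natrM expnS natrM.
have a0 : (0 : R) <= ((q.+1 ^ J)%N)%:R by [].
move: a0 hJ; move: ((q.+1 ^ J)%N)%:R (q.+1%:R) (J.+1%:R) ((q ^ J.+1)%N)%:R => a c j b.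
move=> a0 hJ h; nra.
Qed.
End FinalR.

Lemma arith_m m : (4 <= m)%N ->
  [/\ (2 * m - 2 = (m - 2) + m)%N, (2 * m - 2 = (2 * m - 3).+1)%N,
      ((2 * m - 3).+1 <= 2 * m)%N & (2 * m - 2 <= (m - 1) * 2)%N].
Proof. move=> h; split; lia. Qed.

Local Open Scope ring_scope.

Theorem mainTheorem1 (R : realType) (k : nat) (gamma : R) :
  (2 <= k)%N -> 0 <= gamma ->
  (forall eps : R, 0 < eps -> exists N : nat, forall n : nat, (N <= n)%N ->
     (1 - eps) / powR (k.+1)%:R gamma * powR n%:R (expo R k)
       <= maxratio n k gamma)
  /\
  (2 - (2 ^+ k.-1)^-1 <= gamma ->
     forall n : nat, (1 <= n)%N -> maxratio n k gamma <= powR n%:R (expo R k)).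
Proof.
move=> k2 g0; split; last first.
  move=> hg n n1; apply: bigmax_leB; first exact: powR_ge0.
  by move=> f; apply: part2_one.
move=> eps eps0.
have k1 : (0 < k)%N by lia.
set t := (2 ^ k.-1)%N.
have t0 : (0 < t)%N by rewrite expn_gt0.
pose m := (2 ^ k)%N.
have mt : m = (2 * t)%N by rewrite /m /t -expnS prednK.
have m4 : (4 <= m)%N.
  by rewrite /m; have := leq_pexp2l (isT : (0 < 2)%N) k2.
pose Q := (Num.Def.archi_bound ((2 * m)%:R / eps : R)).+1.
have QR : ((2 * m)%:R / eps : R) < Q%:R.
  apply: lt_le_trans (archi_boundP _) _; first by rewrite divr_ge0 // ltW.
  by rewrite ler_nat.
exists (Q ^ m)%N => n Hn.
have [q /andP [hq1 hq2]] := root_ex n (leq_trans (isT : (0 < 4)%N) m4).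
have Qq : (Q <= q)%N.
  rewrite leqNgt; apply/negP => qQ.
  have := exp_mono m qQ; lia.
have q1 : (0 < q)%N by apply: leq_trans Qq.
have n1 : (0 < n)%N by apply: leq_trans hq1; rewrite expn_gt0 q1.
rewrite /maxratio; apply: le_trans _ (@le_bigmaxB R _ (fun f : {ffun 'I_n -> 'I_n} => fratio k gamma (fun x => f x)) [ffun x => @fI k q n x]) => /=.
have -> : fratio k gamma (fun x => [ffun x => @fI k q n x] x) = fratio k gamma (@fI k q n).
  by apply: fratio_ext => x; rewrite ffunE.
rewrite /fratio !fdegE card_ord.
set P1 := PP (@fI k q n); set Pk := PP (iter k (@fI k q n)).
have hP1 : (P1 <= k * q ^ m + n)%N := PP_fI k1 q1 hq1.
have hPk : (NN k q k ^ 2 <= Pk)%N := PP_iter_fI k1 q1 hq1.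
have hNN : NN k q k = (q ^ (m - 1))%N by rewrite /NN subnn expn0.
have nR : (0 : R) < n%:R by rewrite ltr0n.
set D1 := P1%:R / n%:R.
have D1ge : 1 <= D1.
  rewrite /D1 ler_pdivlMr // mul1r ler_nat.
  by have := PP_ge (@fI k q n); rewrite card_ord.
have D1le : D1 <= k.+1%:R.
  rewrite /D1 ler_pdivrMr // -natrM ler_nat; apply: leq_trans hP1 _.
  have h : (k * q ^ m <= k * n)%N by rewrite leq_mul2l hq1 orbT.
  lia.
have hpow : powR D1 gamma <= powR k.+1%:R gamma.
  by apply: ge0_ler_powR => //; rewrite nnegrE // (le_trans _ D1ge).
have hpos : 0 < powR D1 gamma by apply: powR_gt0; apply: lt_le_trans D1ge.
have hpos' : 0 < powR k.+1%:R gamma by apply: powR_gt0; rewrite ltr0n.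
have RHS0 : 0 <= Pk%:R / n%:R / powR D1 gamma by rewrite !divr_ge0 // ltW.
case: (lerP (1 - eps) 0) => he.
  apply: le_trans RHS0; rewrite mulrAC; apply: mulr_le0_ge0; last by rewrite invr_ge0 ltW.
  by apply: mulr_le0_ge0 => //; exact: powR_ge0.
have hpe : powR n%:R (expo R k) <= ((q.+1 ^ (m - 2))%N)%:R.
  have tR : (2 ^+ k.-1 : R) = t%:R by rewrite natrX.
  have tRpos : (t%:R : R) != 0 by rewrite pnatr_eq0 -lt0n.
  rewrite /expo tR -(ler_pXn2r t0) ?nnegrE ?powR_ge0 ?ler0n //.
  have He : (1 - (t%:R)^-1) * t%:R = (t.-1)%:R :> R.
    by rewrite mulrBl mul1r mulVf // -{1}(prednK t0) -natr1 addrK.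
  rewrite -powR_mulrn ?powR_ge0 // -powRrM He powR_mulrn ?ler0n //.
  rewrite -!natrX ler_nat -expnM.
  have -> : (m - 2 = 2 * t.-1)%N by rewrite mt -{1}(prednK t0) mulnSr addnK.
  have -> : (2 * t.-1 * t = m * t.-1)%N by rewrite mt mulnAC.
  by rewrite expnM; apply: exp_mono; apply: ltnW.
have [A1 A2 A3 A4] := arith_m m4.
have claimA : (1 - eps) * powR n%:R (expo R k) <= ((q ^ (2 * m - 2))%N)%:R / n%:R.
  apply: le_trans (ler_wpM2l (ltW he) hpe) _.
  rewrite ler_pdivlMr //.
  apply: (@le_trans _ _ ((1 - eps) * ((q.+1 ^ (2 * m - 2))%N)%:R)).
    rewrite -mulrA (ler_wpM2l (ltW he)) // -natrM ler_nat.
    rewrite A1.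
    by rewrite expnD leq_mul2l (ltnW hq2) orbT.
  rewrite A2.
  apply: bernR; first exact: ltW.
  rewrite ltr_pdivrMr // in QR.
  apply: (@le_trans _ _ (2 * m)%:R); first by rewrite ler_nat A3.
  apply: (le_trans (ltW QR)); rewrite mulrC; apply: (ler_wpM2l (ltW eps0)); rewrite ler_nat; exact: leqW.
rewrite mulrAC.
apply: (@le_trans _ _ (((q ^ (2 * m - 2))%N)%:R / n%:R / powR k.+1%:R gamma)).
  by rewrite ler_pM2r ?invr_gt0.
apply: (@le_trans _ _ (Pk%:R / n%:R / powR k.+1%:R gamma)).
  rewrite ler_pM2r ?invr_gt0 // ler_pM2r ?invr_gt0 // ler_nat.
  apply: leq_trans _ hPk; rewrite hNN -expnM; exact: leq_pexp2l q1 A4.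
apply: ler_wpM2l; first by rewrite divr_ge0 // ltW.
by rewrite lef_pV2 ?posrE.
Qed.
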